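(* Let $n\ge2$ and let $\rho_1,\rho_2,\rho_3$ be pairwise orthogonal states on $(\mathbb C^2)^{\otimes n}$ (each qubit held by a different party) such that $\rho_1=|g_1\rangle\langle g_1|$ and $\rho_2=|g_2\rangle\langle g_2|$ are GHZ-type states, i.e. $|g_i\rangle=\alpha_i|0\cdots0\rangle+\beta_i|1\cdots1\rangle$ with $\alpha_i,\beta_i$ nonzero complex numbers. Then $\{\rho_1,\rho_2,\rho_3\}$ is not perfectly distinguishable by LOCC.
   Context: ''Perfectly distinguishable by LOCC'': there is a finite-round protocol, in which in each round one party performs a local measurement and broadcasts the outcome, that identifies with probability 1 which state of the set was given. States are orthogonal if $\mathrm{tr}(\rho_k\rho_l)=0$. *)

(* Defs.v *)
From HB Require Import structures.
From mathcomp Require Import all_boot all_order all_algebra.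
Set Implicit Arguments. Unset Strict Implicit. Unset Printing Implicit Defensive.
Import Order.TTheory GRing.Theory Num.Theory.
Local Open Scope ring_scope.

(* Computational basis configurations of n qubits: x : 'I_n -> {0,1}. *)
Definition cfg (n : nat) := {ffun 'I_n -> 'I_2}.
(* Dimension of (C^2)^{(x) n}; equals 2^n. Basis vector i <-> enum_val i. *)
Definition qdim (n : nat) : nat := #|{: cfg n}|.

Section Q.
Variable C : numClosedFieldType.

Definition adjmx (m k : nat) (A : 'M[C]_(m, k)) : 'M[C]_(k, m) :=
  (map_mx Num.conj A)^T.

Definition psdmx (d : nat) (A : 'M[C]_d) : Prop :=
  forall v : 'cV[C]_d, 0 <= (adjmx v *m A *m v) 0 0.

Definition is_state (d : nat) (A : 'M[C]_d) : Prop := psdmx A /\ \tr A = 1.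

(* GHZ-type vector alpha|0...0> + beta|1...1> *)
Definition ghz_vec (n : nat) (a b : C) : 'cV[C]_(qdim n) :=
  \col_i (let x : cfg n := enum_val i in
          (if [forall q, x q == 0%R :> 'I_2] then a else 0)
        + (if [forall q, x q == 1%R :> 'I_2] then b else 0)).

Definition ghz_dm (n : nat) (a b : C) : 'M[C]_(qdim n) :=
  ghz_vec n a b *m adjmx (ghz_vec n a b).

(* the local operator K acting on qubit p, identity on the other qubits *)
Definition lift_local (n : nat) (p : 'I_n) (K : 'M[C]_2) : 'M[C]_(qdim n) :=
  \matrix_(i, j) (let x : cfg n := enum_val i in let y : cfg n := enum_val j in
     K (x p) (y p) * ([forall q, (q != p) ==> (x q == y q)] : bool)%:R).

End Q.

(* A finite-round LOCC protocol: a finite tree.  At a Node, party p performs a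
   local measurement with m outcomes given by Kraus operators K j on its qubit,
   broadcasts the outcome j, and the protocol continues with next j.
   A Leaf announces the identified state k. *)
Inductive protocol (C : numClosedFieldType) (n : nat) : Type :=
| Leaf : 'I_3 -> protocol C n
| Node : forall (p : 'I_n) (m : nat), ('I_m -> 'M[C]_2) -> ('I_m -> protocol C n) -> protocol C n.

Fixpoint valid_protocol (C : numClosedFieldType) (n : nat) (t : protocol C n) : Prop :=
  match t with
  | Leaf _ => True
  | Node p m K next =>
      (\sum_(j < m) adjmx (K j) *m K j = 1%:M)%R /\ forall j, valid_protocol (next j)
  end.

(* With accumulated (unnormalized) operator A along the branch, each leaf with
   announced label k is reached with probability zero from every state l <> k,
   i.e. the identification is correct with probability 1. *)
Fixpoint identifies (C : numClosedFieldType) (n : nat) (rho : 'I_3 -> 'M[C]_(qdim n))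
    (t : protocol C n) (A : 'M[C]_(qdim n)) : Prop :=
  match t with
  | Leaf k => forall l : 'I_3, l != k -> (\tr (A *m rho l *m adjmx A) = 0)%R
  | Node p m K next => forall j, identifies rho (next j) (lift_local p (K j) *m A)%R
  end.

Definition LOCC_perfectly_distinguishable (C : numClosedFieldType) (n : nat)
    (rho : 'I_3 -> 'M[C]_(qdim n)) : Prop :=
  exists t : protocol C n, valid_protocol t /\ identifies rho t 1%:M%R.

(* Main.v *)
Require Import Defs.
From HB Require Import structures.
From mathcomp Require Import all_boot all_order all_algebra.
Import Order.TTheory GRing.Theory Num.Theory.
Local Open Scope ring_scope.
Set Implicit Arguments. Unset Strict Implicit. Unset Printing Implicit Defensive.

Definition cv (n : nat) (i : 'I_(qdim n)) : cfg n := enum_val i.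

Definition prodop (C : numClosedFieldType) (n : nat) (M : 'I_n -> 'M[C]_2) : 'M[C]_(qdim n) :=
  \matrix_(i, j) \prod_q M q (cv i q) (cv j q).

Lemma sum_cfg (C : numClosedFieldType) (n : nat) (F : cfg n -> C) :
  \sum_(k < qdim n) F (cv k) = \sum_(z : cfg n) F z.
Proof. by rewrite /cv -(big_enum_val (A := predT)). Qed.

Lemma prodopE (C : numClosedFieldType) (n : nat) (M : 'I_n -> 'M[C]_2) i j :
  prodop M i j = \prod_q M q (cv i q) (cv j q).
Proof. by rewrite mxE. Qed.

Lemma prodop_mul (C : numClosedFieldType) (n : nat) (M N : 'I_n -> 'M[C]_2) :
  prodop M *m prodop N = prodop (fun q => M q *m N q).
Proof.
apply/matrixP => i j; rewrite !mxE.
rewrite (eq_bigr (fun k => \prod_q (M q (cv i q) (cv k q) * N q (cv k q) (cv j q)))); last first.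
  by move=> k _; rewrite !prodopE big_split.
rewrite (sum_cfg (fun z => \prod_q (M q (cv i q) (z q) * N q (z q) (cv j q)))).
under [RHS]eq_bigr => q _ do rewrite mxE.
by rewrite bigA_distr_bigA.
Qed.

Lemma prodop_ext (C : numClosedFieldType) (n : nat) (M N : 'I_n -> 'M[C]_2) :
  (forall q, M q = N q) -> prodop M = prodop N.
Proof. by move=> E; apply/matrixP => i j; rewrite !prodopE; apply: eq_bigr => q _; rewrite E. Qed.

Lemma prod_ind (C : numClosedFieldType) (n : nat) (P : pred 'I_n) (a b : 'I_n -> 'I_2) :
  \prod_(q | P q) (((a q == b q) : bool)%:R : C) = ([forall q, P q ==> (a q == b q)] : bool)%:R.
Proof.
case: (boolP [forall q, P q ==> (a q == b q)]) => [/forallP H | /forallPn [q]].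
  by rewrite big1 // => q Pq; move: (H q); rewrite Pq /= => ->.
rewrite negb_imply => /andP [Pq /negbTE abq].
by rewrite (bigD1 q) //= abq mul0r.
Qed.

Definition upd (C : numClosedFieldType) (n : nat) (p : 'I_n) (K : 'M[C]_2) : 'I_n -> 'M[C]_2 :=
  fun q => if q == p then K else 1%:M.

Lemma lift_prodop (C : numClosedFieldType) (n : nat) (p : 'I_n) (K : 'M[C]_2) :
  lift_local p K = prodop (upd p K).
Proof.
apply/matrixP => i j; rewrite prodopE mxE (bigD1 p) //= /upd eqxx.
congr (_ * _).
rewrite -(prod_ind C (fun q => q != p)).
by apply: eq_bigr => q /negbTE ->; rewrite mxE.
Qed.

Lemma prodop1 (C : numClosedFieldType) (n : nat) :
  prodop (fun _ : 'I_n => (1%:M : 'M[C]_2)) = 1%:M.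
Proof.
apply/matrixP => i j; rewrite prodopE mxE.
under eq_bigr => q _ do rewrite mxE.
rewrite (prod_ind C predT).
congr ((_ : bool)%:R).
apply/forallP/eqP => [H | ->] //.
  apply: enum_val_inj; apply/ffunP => q; exact/eqP/H.
by move=> q; rewrite eqxx implybT.
Qed.

Lemma adj_prodop (C : numClosedFieldType) (n : nat) (M : 'I_n -> 'M[C]_2) :
  adjmx (prodop M) = prodop (fun q => adjmx (M q)).
Proof.
apply/matrixP => i j; rewrite /adjmx !mxE rmorph_prod.
by apply: eq_bigr => q _; rewrite !mxE.
Qed.

Lemma adj1 (C : numClosedFieldType) (d : nat) : adjmx (1%:M : 'M[C]_d) = 1%:M.
Proof. by rewrite /adjmx map_mx1 trmx1. Qed.

Lemma adj_lift (C : numClosedFieldType) (n : nat) (p : 'I_n) (K : 'M[C]_2) :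
  adjmx (lift_local p K) = lift_local p (adjmx K).
Proof.
rewrite !lift_prodop adj_prodop; apply: prodop_ext => q.
by rewrite /upd; case: (q == p) => //; rewrite adj1.
Qed.

Lemma lift_mul (C : numClosedFieldType) (n : nat) (p : 'I_n) (K L : 'M[C]_2) :
  lift_local p K *m lift_local p L = lift_local p (K *m L).
Proof.
rewrite !lift_prodop prodop_mul; apply: prodop_ext => q.
by rewrite /upd; case: (q == p) => //; rewrite mulmx1.
Qed.

Lemma lift_sum (C : numClosedFieldType) (n : nat) (p : 'I_n) (m : nat) (K : 'I_m -> 'M[C]_2) :
  \sum_j lift_local p (K j) = lift_local p (\sum_j K j).
Proof.
apply/matrixP => i k; rewrite summxE [RHS]mxE /= summxE mulr_suml.
by apply: eq_bigr => j _; rewrite mxE.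
Qed.

Lemma lift1 (C : numClosedFieldType) (n : nat) (p : 'I_n) :
  lift_local p (1%:M : 'M[C]_2) = 1%:M.
Proof.
rewrite lift_prodop -(prodop1 C n); apply: prodop_ext => q.
by rewrite /upd; case: (q == p).
Qed.

Lemma complete_lift (C : numClosedFieldType) (n : nat) (p : 'I_n) (m : nat) (K : 'I_m -> 'M[C]_2) :
  \sum_(j < m) adjmx (K j) *m K j = 1%:M ->
  \sum_j adjmx (lift_local p (K j)) *m lift_local p (K j) = 1%:M.
Proof.
move=> H.
under eq_bigr => j _ do rewrite adj_lift lift_mul.
by rewrite lift_sum H lift1.
Qed.

Definition zc (n : nat) (c : 'I_2) : cfg n := [ffun => c].
Definition vc (C : numClosedFieldType) (n : nat) (c : 'I_2) : 'cV[C]_(qdim n) :=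
  delta_mx (enum_rank (zc n c)) 0.
Arguments vc {C} n c.

Lemma eq_rank (n : nat) (i : 'I_(qdim n)) (z : cfg n) : (i == enum_rank z) = (cv i == z).
Proof.
apply/eqP/eqP => [-> | <-]; first by rewrite /cv enum_rankK.
by rewrite /cv enum_valK.
Qed.

Lemma prodop_vc (C : numClosedFieldType) (n : nat) (M : 'I_n -> 'M[C]_2) c i :
  (prodop M *m vc n c) i 0 = \prod_q M q (cv i q) c.
Proof.
rewrite /vc -colE mxE prodopE; apply: eq_bigr => q _.
by rewrite /cv enum_rankK ffunE.
Qed.

Lemma prodop_vc0 (C : numClosedFieldType) (n : nat) (M : 'I_n -> 'M[C]_2) c :
  prodop M *m vc n c = 0 -> exists q, forall b, M q b c = 0.
Proof.
move=> H.
case: (boolP [exists q, [forall b, M q b c == 0]]) => [/existsP [q /forallP Hq] | Hn].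
  by exists q => b; apply/eqP.
exfalso.
pose x : cfg n := [ffun q => odflt 0 [pick b | M q b c != 0]].
have Hx : forall q, M q (x q) c != 0.
  move=> q; rewrite ffunE; case: pickP => [b -> // | Hb].
  move: Hn; rewrite negb_exists => /forallP /(_ q) /forallPn [b].
  by rewrite Hb.
move/matrixP: H => /(_ (enum_rank x : 'I_(qdim n)) 0).
rewrite prodop_vc mxE /cv enum_rankK => /eqP.
apply/negP; apply/prodf_neq0 => q _; apply: Hx.
Qed.

Lemma prodop_vc_col0 (C : numClosedFieldType) (n : nat) (M : 'I_n -> 'M[C]_2) c q :
  (forall b, M q b c = 0) -> prodop M *m vc n c = 0.
Proof.
move=> Hq; apply/matrixP => i j; rewrite ord1 prodop_vc mxE.
by rewrite (bigD1 q) //= Hq mul0r.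
Qed.

Lemma prodop0 (C : numClosedFieldType) (n : nat) (M : 'I_n -> 'M[C]_2) q :
  M q = 0 -> prodop M = 0.
Proof.
move=> Hq; apply/matrixP => i j; rewrite prodopE mxE.
by rewrite (bigD1 q) //= Hq mxE mul0r.
Qed.

Lemma ghz_dec (C : numClosedFieldType) (n : nat) (a b : C) :
  ghz_vec n a b = a *: vc n 0 + b *: vc n 1.
Proof.
apply/matrixP => i j; rewrite ord1 !mxE /= !eq_rank eqxx !andbT.
have E : forall (c : 'I_2) (s : C), (if [forall q, cv i q == c] then s else 0) = s * (cv i == zc n c)%:R.
  move=> c s; have -> : [forall q, cv i q == c] = (cv i == zc n c).
    apply/forallP/eqP => [H | -> q]; last by rewrite ffunE.
    by apply/ffunP => q; rewrite ffunE; apply/eqP.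
  by case: (cv i == zc n c); rewrite ?mulr1 ?mulr0.
by rewrite -!E.
Qed.

Lemma det_nz (C : numClosedFieldType) (a1 b1 a2 b2 : C) :
  a1 != 0 -> b2 != 0 -> a1^* * a2 + b1^* * b2 = 0 -> a1 * b2 - a2 * b1 != 0.
Proof.
move=> Ha Hb Ho; apply/negP; rewrite subr_eq0 => /eqP E.
have : (a1^* * a2 + b1^* * b2) * b1 = (a1 * a1^* + b1 * b1^*) * b2.
  rewrite mulrDl -!mulrA -E [b2 * b1]mulrC mulrDl !mulrA [a1^* * a1]mulrC.
  by rewrite [b1^* * b1]mulrC.
rewrite Ho mul0r => /esym /eqP; rewrite mulf_eq0 (negbTE Hb) orbF.
apply/negP; rewrite gt_eqF //.
apply: ltr_wpDr; first exact: mul_conjC_ge0.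
by rewrite mul_conjC_gt0.
Qed.

Lemma det_arg (C : numClosedFieldType) (d : nat) (a1 b1 a2 b2 : C) (X Y : 'cV[C]_d) :
  a1 * b2 - a2 * b1 != 0 ->
  a1 *: X + b1 *: Y = 0 -> a2 *: X + b2 *: Y = 0 -> X = 0 /\ Y = 0.
Proof.
move=> Hd E1 E2.
have HX : (a1 * b2 - a2 * b1) *: X = b2 *: (a1 *: X + b1 *: Y) - b1 *: (a2 *: X + b2 *: Y).
  rewrite !scalerDr !scalerA scalerBl opprD addrACA [b2 * b1]mulrC subrr addr0.
  by rewrite [b2 * a1]mulrC [b1 * a2]mulrC.
have HY : (a1 * b2 - a2 * b1) *: Y = a1 *: (a2 *: X + b2 *: Y) - a2 *: (a1 *: X + b1 *: Y).
  rewrite !scalerDr !scalerA scalerBl opprD addrACA [a1 * a2]mulrC subrr add0r.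
  done.
rewrite E1 E2 !scaler0 subrr in HX; rewrite E1 E2 !scaler0 subrr in HY.
split; apply/eqP.
  by move/eqP: HX; rewrite scaler_eq0 (negbTE Hd).
by move/eqP: HY; rewrite scaler_eq0 (negbTE Hd).
Qed.

Lemma adjmx_mul (C : numClosedFieldType) (m k l : nat) (A : 'M[C]_(m, k)) (B : 'M[C]_(k, l)) :
  adjmx (A *m B) = adjmx B *m adjmx A.
Proof. by rewrite /adjmx map_mxM trmx_mul. Qed.

Lemma adjmx_lin (C : numClosedFieldType) (m k : nat) (a b : C) (A B : 'M[C]_(m, k)) :
  adjmx (a *: A + b *: B) = a^* *: adjmx A + b^* *: adjmx B.
Proof. by apply/matrixP => i j; rewrite /adjmx !mxE rmorphD !rmorphM. Qed.

Lemma adj_self_eq0 (C : numClosedFieldType) (d : nat) (v : 'cV[C]_d) :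
  adjmx v *m v = 0 -> v = 0.
Proof.
move/matrixP/(_ 0 0); rewrite !mxE => H.
apply/matrixP => i j; rewrite ord1 mxE.
have H' : forall k : 'I_d, (adjmx v) 0 k * v k 0 = 0.
  move=> k; apply: (psumr_eq0P _ H) => // l _.
  by rewrite /adjmx !mxE mulrC mul_conjC_ge0.
by move: (H' i); rewrite /adjmx !mxE mulrC => /eqP; rewrite mul_conjC_eq0 => /eqP.
Qed.

Lemma tr_pure (C : numClosedFieldType) (d : nat) (A : 'M[C]_d) (g : 'cV[C]_d) :
  \tr (A *m (g *m adjmx g) *m adjmx A) = (adjmx (A *m g) *m (A *m g)) 0 0.
Proof.
by rewrite adjmx_mul -!mulmxA mulmxA mxtrace_mulC mulmxA -mulmxA trace_mx11.
Qed.

Lemma tr_pure0 (C : numClosedFieldType) (d : nat) (A : 'M[C]_d) (g : 'cV[C]_d) :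
  \tr (A *m (g *m adjmx g) *m adjmx A) = 0 -> A *m g = 0.
Proof.
rewrite tr_pure => H; apply: adj_self_eq0.
by apply/matrixP => i j; rewrite !ord1 H mxE.
Qed.

Lemma orth (C : numClosedFieldType) (n : nat) (rho : 'I_3 -> 'M[C]_(qdim n)) (g1 g2 : 'cV[C]_(qdim n)) :
  rho 0 = g1 *m adjmx g1 -> rho 1 = g2 *m adjmx g2 ->
  forall t : protocol C n, valid_protocol t -> forall A, identifies rho t A ->
  adjmx (A *m g1) *m (A *m g2) = 0.
Proof.
move=> H0 H1; elim=> [k | p m K next IH] /=.
  move=> _ A H; case: (k =P 0) => [Hk | Hk].
    have := H 1; rewrite Hk H1 => /(_ isT) /tr_pure0 ->.
    by rewrite mulmx0.
  have := H 0; rewrite H0 eq_sym => /(_ (introN eqP Hk)) /tr_pure0 ->.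
  by rewrite /adjmx map_mx0 trmx0 mul0mx.
move=> [Hsum Hv] A H.
rewrite -[A *m g2]mul1mx -(complete_lift p Hsum) mulmx_suml mulmx_sumr.
apply: big1 => j _.
have := IH j (Hv j) _ (H j).
by rewrite !adjmx_mul !mulmxA.
Qed.

Lemma zc_eq (n : nat) (hn : (0 < n)%N) (c c' : 'I_2) :
  (enum_rank (zc n c) == enum_rank (zc n c')) = (c == c').
Proof.
rewrite (inj_eq enum_rank_inj); apply/eqP/eqP => [H | -> //].
have := congr1 (fun f : cfg n => f (Ordinal hn)) H.
by rewrite !ffunE.
Qed.

Lemma vc_inner (C : numClosedFieldType) (n : nat) (hn : (0 < n)%N) (c c' : 'I_2) :
  (adjmx (vc n c) *m (vc n c' : 'cV[C]_(qdim n))) 0 0 = (c == c')%:R.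
Proof.
rewrite /adjmx /vc map_delta_mx trmx_delta mul_delta_mx_cond zc_eq //.
by case: (c == c'); rewrite ?mulr1n ?mulr0n !mxE.
Qed.

Lemma vc_inner' (C : numClosedFieldType) (n : nat) (hn : (0 < n)%N) (c c' : 'I_2) :
  \sum_j adjmx (vc n c) 0 j * (vc n c' : 'cV[C]_(qdim n)) j 0 = (c == c')%:R.
Proof. by rewrite -(vc_inner _ hn) mxE. Qed.

Lemma ortho_single (C : numClosedFieldType) (d : nat) (X : 'cV[C]_d) (s t : C) :
  s != 0 -> t != 0 -> adjmx (s *: X) *m (t *: X) = 0 -> X = 0.
Proof.
move=> Hs Ht H; apply: adj_self_eq0.
have E : adjmx (s *: X) = s^* *: adjmx X.
  by apply/matrixP => i j; rewrite /adjmx !mxE rmorphM.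
move: H; rewrite E -scalemxAl -scalemxAr scalerA => /eqP.
by rewrite scaler_eq0 mulf_eq0 conjC_eq0 (negbTE Hs) (negbTE Ht) /= => /eqP.
Qed.

Lemma mul_ghz (C : numClosedFieldType) (n : nat) (A : 'M[C]_(qdim n)) (a b : C) :
  A *m ghz_vec n a b = a *: (A *m vc n 0) + b *: (A *m vc n 1).
Proof. by rewrite ghz_dec mulmxDr -!scalemxAr. Qed.

Lemma tr_split (C : numClosedFieldType) (n : nat) (p : 'I_n) (m : nat) (K : 'I_m -> 'M[C]_2)
  (X : 'M[C]_(qdim n)) :
  \sum_(j < m) adjmx (K j) *m K j = 1%:M ->
  \tr X = \sum_j \tr (lift_local p (K j) *m X *m adjmx (lift_local p (K j))).
Proof.
move=> Hs; rewrite -{1}[X]mulmx1 -(complete_lift p Hs) mulmx_sumr raddf_sum.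
apply: eq_bigr => j _.
by rewrite mulmxA [LHS]mxtrace_mulC mulmxA.
Qed.

Lemma inv (C : numClosedFieldType) (n : nat) (rho : 'I_3 -> 'M[C]_(qdim n)) (a1 b1 a2 b2 : C) :
  a1 != 0 -> b1 != 0 -> a2 != 0 -> b2 != 0 ->
  rho 0 = ghz_dm n a1 b1 -> rho 1 = ghz_dm n a2 b2 -> a1 * b2 - a2 * b1 != 0 ->
  forall t : protocol C n, valid_protocol t -> forall M : 'I_n -> 'M[C]_2,
  \tr (prodop M *m rho 2 *m adjmx (prodop M)) != 0 ->
  ~ (prodop M *m vc n 0 = 0 /\ prodop M *m vc n 1 = 0) ->
  ~ identifies rho t (prodop M).
Proof.
move=> Ha1 Hb1 Ha2 Hb2 H0 H1 Hd; elim=> [k | p m K next IH] /=.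
  move=> _ M Htr Hnz H.
  case: (k =P 2) => [Hk | Hk]; last first.
    have := H 2; rewrite eq_sym => /(_ (introN eqP Hk)) E.
    by rewrite E eqxx in Htr.
  have G1 := H 0; rewrite Hk H0 /ghz_dm in G1; move: (tr_pure0 (G1 isT)).
  have G2 := H 1; rewrite Hk H1 /ghz_dm in G2; move: (tr_pure0 (G2 isT)).
  rewrite !mul_ghz => E2 E1.
  by apply: Hnz; apply: (det_arg Hd E1 E2).
move=> [Hsum Hv] M Htr Hnz H.
have O := orth H0 H1 (t := Node p K next) (conj Hsum Hv) H.
rewrite !mul_ghz in O.
pose A := prodop M.
have [j Hj] : exists j, \tr (lift_local p (K j) *m (A *m rho 2 *m adjmx A) *m adjmx (lift_local p (K j))) != 0.
  case: (boolP [exists j, \tr (lift_local p (K j) *m (A *m rho 2 *m adjmx A) *m adjmx (lift_local p (K j))) != 0]).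
    by move/existsP.
  rewrite negb_exists => /forallP Hall.
  move: Htr; rewrite (tr_split p _ Hsum) big1 ?eqxx // => i _.
  by apply/eqP; rewrite -[_ == 0]negbK Hall.
pose M' := fun q => if q == p then K j *m M q else M q.
have EA : lift_local p (K j) *m A = prodop M'.
  rewrite /A lift_prodop prodop_mul; apply: prodop_ext => q.
  by rewrite /upd /M'; case: (q == p); rewrite ?mul1mx.
have Htr' : \tr (prodop M' *m rho 2 *m adjmx (prodop M')) != 0.
  by rewrite -EA adjmx_mul !mulmxA; move: Hj; rewrite !mulmxA.
apply: (IH j (Hv j) M' Htr'); last by rewrite -EA; apply: H.
move=> [E0 E1].
have [q0 Hq0] := prodop_vc0 E0.
have [q1 Hq1] := prodop_vc0 E1.
case: (q0 =P p) => [Eq0 | Nq0]; last first.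
  have Ae : A *m vc n 0 = 0.
    apply: (prodop_vc_col0 (q := q0)) => b.
    by move: (Hq0 b); rewrite /M' (negbTE (introN eqP Nq0)).
  rewrite Ae !scaler0 !add0r in O.
  by apply: Hnz; split => //; apply: (ortho_single Hb1 Hb2 O).
case: (q1 =P p) => [Eq1 | Nq1]; last first.
  have Af : A *m vc n 1 = 0.
    apply: (prodop_vc_col0 (q := q1)) => b.
    by move: (Hq1 b); rewrite /M' (negbTE (introN eqP Nq1)).
  rewrite Af !scaler0 !addr0 in O.
  by apply: Hnz; split => //; apply: (ortho_single Ha1 Ha2 O).
have HM : M' p = 0.
  apply/matrixP => b c; rewrite mxE.
  case: c => [[|[|c]]] Hc //.
    by have := Hq0 b; rewrite Eq0; congr (_ = _); congr (M' p b); apply: val_inj.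
  by have := Hq1 b; rewrite Eq1; congr (_ = _); congr (M' p b); apply: val_inj.
move: Htr'; rewrite (prodop0 HM) !mul0mx.
by rewrite ?mul0mx ?mulmx0 raddf0 eqxx.
Qed.

Unset Implicit Arguments.
Set Strict Implicit.

Theorem mainTheorem6 (C : numClosedFieldType) (n : nat) (hn : (2 <= n)%N)
  (rho : 'I_3 -> 'M[C]_(qdim n)) :
  (forall k, is_state (rho k)) ->
  (forall k l : 'I_3, k != l -> \tr (rho k *m rho l) = 0) ->
  (exists a1 b1 : C, [/\ a1 != 0, b1 != 0 & rho 0 = ghz_dm n a1 b1]) ->
  (exists a2 b2 : C, [/\ a2 != 0, b2 != 0 & rho 1 = ghz_dm n a2 b2]) ->
  ~ LOCC_perfectly_distinguishable rho.
Proof.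
move=> Hst _ [a1 [b1 [Ha1 Hb1 H0]]] [a2 [b2 [Ha2 Hb2 H1]]] [t [Hv Hid]].
have hn0 : (0 < n)%N by apply: ltnW.
have O := orth (g1 := ghz_vec n a1 b1) (g2 := ghz_vec n a2 b2) H0 H1 Hv Hid.
have Hco : a1^* * a2 + b1^* * b2 = 0.
  move/matrixP: O => /(_ 0 0).
  rewrite !mul1mx !ghz_dec adjmx_lin mulmxDl !mulmxDr -!scalemxAl -!scalemxAr !mxE.
  rewrite !vc_inner' // !eqxx /= !mulr1 !mulr0 !addr0 add0r.
  done.
have Hd := det_nz Ha1 Hb2 Hco.
have := inv Ha1 Hb1 Ha2 Hb2 H0 H1 Hd Hv (M := fun _ => 1%:M).
rewrite prodop1 adj1 mul1mx mulmx1 mul1mx.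
have [_ ->] := Hst 2.
move=> /(_ (oner_neq0 _)) HH; apply: HH => // [[E0 _]].
move/matrixP: E0 => /(_ (enum_rank (zc n 0) : 'I_(qdim n)) 0).
by rewrite !mxE !eqxx /= => /eqP; rewrite oner_eq0.
Qed.
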